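(* Let $(\mathcal{C},\psi)$ be a t-pair with $\operatorname{typ}(\mathcal{U}^{ii}_{\mathcal{C}\psi})\ne\alpha$. Then $\operatorname{typ}(\mathcal{U}^{id}_{\mathcal{C}\psi})=\operatorname{typ}(\mathcal{U}^{ia}_{\mathcal{C}\psi})=\epsilon$.
   Context: Let $\mathbb{N}=\{0,1,2,\dots\}$; for an integer $k\ge 2$ let $E_k=\{0,1,\dots,k-1\}$; let $\mathcal{P}(\mathbb{N})$ be the set of nonempty finite subsets of $\mathbb{N}$. Let $F$ be a nonempty set (of attribute names). A decision table $T\in\mathcal{M}_k(F)$ is a rectangular table with $n\ge 1$ columns labeled with attributes $f_1,\dots,f_n\in F$ (any two columns labeled with the same attribute are equal), whose rows are pairwise different tuples from $E_k^n$ (the set of rows may be empty), each row being labeled with a set of decisions from $\mathcal{P}(\mathbb{N})$. Write $At(T)=\{f_1,\dots,f_n\}$ and $\Delta(T)$ for the set of rows. For a word $\alpha=(f_{i_1},\delta_1)\cdots(f_{i_m},\delta_m)$ with $f_{i_j}\in At(T)$, $\delta_j\in E_k$, the subtable $T\alpha$ consists of the rows of $T$ having value $\delta_j$ in column $f_{i_j}$ for all $j$ ($T\lambda=T$ for the empty word $\lambda$). Operations on tables: (1) removal of a column from a table with at least two columns (if groups of equal rows appear, only the first row of each group, with its decision set, is kept); (2) changing of decisions: the decision sets attached to rows are replaced arbitrarily by sets from $\mathcal{P}(\mathbb{N})$; (3) permutation of columns: swap two columns together with their attribute labels; (4) duplication of columns: add a copy of a column (with its label) next to it. A set $\mathcal{C}\subseteq\mathcal{M}_k(F)$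 is a closed class if every table obtained from a table of $\mathcal{C}$ by finitely many such operations belongs to $\mathcal{C}$. A decision tree over $\mathcal{M}_k(F)$ is a finite directed tree with a root (unique node with no entering edge) and at least two nodes such that the root and the edges leaving the root are unlabeled, each worker node (neither root nor terminal) is labeled with an attribute from $F$, each edge leaving a worker node is labeled with a number from $E_k$, and each terminal node is labeled with a number from $\mathbb{N}$. For a complete path $\xi$ (root to terminal node) whose worker nodes are labeled $f_{j_1},\dots,f_{j_m}$ in order, with the edges leaving them labeled $\delta_1,\dots,\delta_m$, put $\pi(\xi)=(f_{j_1},\delta_1)\cdots(f_{j_m},\delta_m)$, $\varphi(\xi)=f_{j_1}\cdots f_{j_m}$ (both empty if $m=0$), and let $\tau(\xi)$ be the label of its terminal node. A nondeterministic decision tree for $T$ is a decision tree $\Gamma$ whose worker-node attributes lie in $At(T)$, such that $\bigcup_{\xi}\Delta(T\pi(\xi))=\Delta(T)$ (union over complete paths), and for every row $r\in\Delta(T)$ and every complete path $\xi$ with $r\in\Delta(T\pi(\xi))$, $\tau(\xi)$ belongs to the decision set of $r$. A decision tree is deterministic if exactly one edge leaves the root and the edges leaving each worker node have pairwise different labels; a deterministic decision tree for $T$ is a deterministic decision tree that is a nondeterministic decision tree for $T$. A complexity measure over $\mathcal{M}_k(F)$ is any map $\psi:F^*\to\mathbb{N}$, where $F^*$ is the set of finite words over $F$ including the empty word $\lambda$. For a tree, $\psi(\Gamma)=\max_\xi\psi(\varphi(\xi))$ over complete paths. For $T$ with columns labeled $f_1,\dots,f_n$: $\psi^i(T)=\psi(f_1\cdots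 f_n)$, $\psi^d(T)$ is the minimum complexity of a deterministic decision tree for $T$, $\psi^a(T)$ the minimum complexity of a nondeterministic decision tree for $T$. A t-pair $(\mathcal{C},\psi)$ consists of a closed class $\mathcal{C}\subseteq\mathcal{M}_k(F)$ and a complexity measure $\psi$ over $\mathcal{M}_k(F)$. For $b,c\in\{i,d,a\}$ define the partial function $\mathcal{U}^{bc}_{\mathcal{C}\psi}(n)=\max\{\psi^b(T):T\in\mathcal{C},\psi^c(T)\le n\}$ (defined iff this set is nonempty and finite). For a partial function $g:\mathbb{N}\to\mathbb{N}$ with domain $\mathrm{Dom}(g)$, let $\mathrm{Dom}^+(g)=\{n\in\mathrm{Dom}(g):g(n)\ge n\}$, $\mathrm{Dom}^-(g)=\{n\in\mathrm{Dom}(g):g(n)\le n\}$. Its type $\operatorname{typ}(g)$ is: $\alpha$ if $\mathrm{Dom}(g)$ is infinite and $g$ is bounded above; $\beta$ if $\mathrm{Dom}(g)$ is infinite, $\mathrm{Dom}^+(g)$ is finite and $g$ is unbounded above; $\gamma$ if $\mathrm{Dom}^+(g)$ and $\mathrm{Dom}^-(g)$ are both infinite; $\delta$ if $\mathrm{Dom}(g)$ is infinite and $\mathrm{Dom}^-(g)$ is finite; $\epsilon$ if $\mathrm{Dom}(g)$ is finite. *)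

(* Defs.v *)
From Stdlib Require List.
From mathcomp Require Import all_boot.

Set Implicit Arguments.
Unset Strict Implicit.
Unset Printing Implicit Defensive.

(* Decision tables over an attribute set F (arbitrary type), values in *)
(* E_k = {0,...,k-1} (naturals < k).  A table stores its column labels *)
(* (f_1 ... f_n) and its rows, in order; each row is a pair            *)
(* (tuple of values, decision set) where the decision set (a nonempty  *)
(* finite subset of N) is represented by a nonempty list of naturals   *)
(* (membership is what matters).                                       *)

Record table (F : Type) := Table {
  attrs : seq F;
  rows : seq (seq nat * seq nat)
}.

Definition is_table (F : Type) (k : nat) (T : table F) : Prop :=
  [/\ 0 < size (attrs T),
      (forall r, r \in rows T ->
         [/\ size r.1 = size (attrs T), all (fun v => v < k) r.1 & r.2 != [::]]),
      uniq (map fst (rows T)) &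
      (forall i j, i < size (attrs T) -> j < size (attrs T) ->
         onth (attrs T) i = onth (attrs T) j ->
         forall r, r \in rows T -> nth 0 r.1 i = nth 0 r.1 j)].

Definition rem_at (T : Type) (i : nat) (s : seq T) : seq T :=
  take i s ++ drop i.+1 s.

Definition dup_at (T : Type) (i : nat) (s : seq T) : seq T :=
  take i.+1 s ++ drop i s.

Definition swap_at (T : Type) (i j : nat) (s : seq T) : seq T :=
  match s with
  | [::] => [::]
  | x0 :: _ =>
      [seq nth x0 s (if t == i then j else if t == j then i else t)
      | t <- iota 0 (size s)]
  end.

Fixpoint undup_first (A : eqType) (B : Type) (s : seq (A * B)) : seq (A * B) :=
  match s with
  | [::] => [::]
  | x :: s' => x :: [seq y <- undup_first s' | y.1 != x.1]
  end.

Inductive table_step (F : Type) (T : table F) : table F -> Prop :=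
| step_remove (i : nat) :
    1 < size (attrs T) -> i < size (attrs T) ->
    table_step T (Table (rem_at i (attrs T))
                        (undup_first [seq (rem_at i r.1, r.2) | r <- rows T]))
| step_change (T' : table F) :
    attrs T' = attrs T ->
    map fst (rows T') = map fst (rows T) ->
    (forall r, r \in rows T' -> r.2 != [::]) ->
    table_step T T'
| step_permute (i j : nat) :
    i < size (attrs T) -> j < size (attrs T) ->
    table_step T (Table (swap_at i j (attrs T))
                        [seq (swap_at i j r.1, r.2) | r <- rows T])
| step_duplicate (i : nat) :
    i < size (attrs T) ->
    table_step T (Table (dup_at i (attrs T))
                        [seq (dup_at i r.1, r.2) | r <- rows T]).

(* closed classes: subsets of M_k(F) closed under the operations
   (closure under one step is equivalent to closure under finitely many) *)
Definition closed_class (F : Type) (k : nat) (C : table F -> Prop) : Prop :=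
  (forall T, C T -> is_table k T) /\
  (forall T T', C T -> table_step T T' -> C T').

(* Decision trees.  A non-root node is either terminal (labelled by a  *)
(* natural number) or a worker node labelled by an attribute, with its *)
(* list of outgoing edges (edge label, child).  A decision tree is the *)
(* list of children of the (unlabelled) root.                          *)

Inductive dnode (F : Type) :=
| Term (a : nat)
| Work (f : F) (ch : seq (nat * dnode F)).

Arguments Term {F} a.

Inductive wf_dnode (F : Type) (k : nat) : dnode F -> Prop :=
| wf_term a : wf_dnode k (Term a)
| wf_work f ch :
    ch <> [::] ->
    (forall d t, List.In (d, t) ch -> d < k) ->
    (forall d t, List.In (d, t) ch -> wf_dnode k t) ->
    wf_dnode k (Work f ch).

Inductive det_dnode (F : Type) : dnode F -> Prop :=
| det_term a : det_dnode (Term a)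
| det_work f ch :
    uniq (map fst ch) ->
    (forall d t, List.In (d, t) ch -> det_dnode t) ->
    det_dnode (Work f ch).

Inductive attrs_in (F : Type) (P : F -> Prop) : dnode F -> Prop :=
| ai_term a : attrs_in P (Term a)
| ai_work f ch :
    P f ->
    (forall d t, List.In (d, t) ch -> attrs_in P t) ->
    attrs_in P (Work f ch).

Inductive cpath (F : Type) : dnode F -> seq (F * nat) -> nat -> Prop :=
| cp_term a : cpath (Term a) [::] a
| cp_work f ch d t p a :
    List.In (d, t) ch -> cpath t p a -> cpath (Work f ch) ((f, d) :: p) a.

Definition dtree (F : Type) := seq (dnode F).

Definition is_dtree (F : Type) (k : nat) (G : dtree F) : Prop :=
  G <> [::] /\ forall t, List.In t G -> wf_dnode k t.

Definition is_det (F : Type) (G : dtree F) : Prop :=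
  exists t, G = [:: t] /\ det_dnode t.

Definition complete_path (F : Type) (G : dtree F) (p : seq (F * nat)) (a : nat)
  : Prop := exists2 t, List.In t G & cpath t p a.

Definition in_sub (F : Type) (T : table F) (r : seq nat) (p : seq (F * nat))
  : Prop :=
  forall f d, List.In (f, d) p ->
    exists c, onth (attrs T) c = Some f /\ nth 0 r c = d.

Definition nondet_tree_for (F : Type) (k : nat) (T : table F) (G : dtree F)
  : Prop :=
  [/\ is_dtree k G,
      (forall t, List.In t G -> attrs_in (fun f => List.In f (attrs T)) t),
      (forall r, r \in rows T -> exists p a, complete_path G p a /\ in_sub T r.1 p) &
      (forall r p a, r \in rows T -> complete_path G p a -> in_sub T r.1 p ->
         a \in r.2)].

Definition det_tree_for (F : Type) (k : nat) (T : table F) (G : dtree F)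
  : Prop := nondet_tree_for k T G /\ is_det G.

Definition tree_cost (F : Type) (psi : seq F -> nat) (G : dtree F) (v : nat)
  : Prop :=
  (exists p a, complete_path G p a /\ psi (map fst p) = v) /\
  (forall p a, complete_path G p a -> psi (map fst p) <= v).

Inductive cmode := Mi | Md | Ma.

Definition psi_of (F : Type) (k : nat) (psi : seq F -> nat) (b : cmode)
  (T : table F) (v : nat) : Prop :=
  match b with
  | Mi => v = psi (attrs T)
  | Md => (exists G, det_tree_for k T G /\ tree_cost psi G v) /\
          (forall G w, det_tree_for k T G -> tree_cost psi G w -> v <= w)
  | Ma => (exists G, nondet_tree_for k T G /\ tree_cost psi G v) /\
          (forall G w, nondet_tree_for k T G -> tree_cost psi G w -> v <= w)
  end.

Definition Uset (F : Type) (k : nat) (C : table F -> Prop) (psi : seq F -> nat)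
  (b c : cmode) (n v : nat) : Prop :=
  exists T, [/\ C T, psi_of k psi b T v & exists w, psi_of k psi c T w /\ w <= n].

(* graph of the partial function U^{bc}_{C psi}: U(n) = m iff m is the
   maximum of the set (defined iff the set is nonempty and finite) *)
Definition U (F : Type) (k : nat) (C : table F -> Prop) (psi : seq F -> nat)
  (b c : cmode) (n m : nat) : Prop :=
  Uset k C psi b c n m /\ forall v, Uset k C psi b c n v -> v <= m.

Definition infinite_set (P : nat -> Prop) : Prop :=
  forall N, exists n, N <= n /\ P n.

Definition finite_set (P : nat -> Prop) : Prop :=
  exists N, forall n, P n -> n < N.

Definition Dom (g : nat -> nat -> Prop) (n : nat) : Prop := exists m, g n m.
Definition DomP (g : nat -> nat -> Prop) (n : nat) : Prop :=
  exists m, g n m /\ n <= m.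
Definition DomM (g : nat -> nat -> Prop) (n : nat) : Prop :=
  exists m, g n m /\ m <= n.

Definition bounded_above (g : nat -> nat -> Prop) : Prop :=
  exists B, forall n m, g n m -> m <= B.

Inductive ftype := Talpha | Tbeta | Tgamma | Tdelta | Tepsilon.

Definition is_typ (g : nat -> nat -> Prop) (t : ftype) : Prop :=
  match t with
  | Talpha => infinite_set (Dom g) /\ bounded_above g
  | Tbeta => [/\ infinite_set (Dom g), finite_set (DomP g) & ~ bounded_above g]
  | Tgamma => infinite_set (DomP g) /\ infinite_set (DomM g)
  | Tdelta => infinite_set (Dom g) /\ finite_set (DomM g)
  | Tepsilon => finite_set (Dom g)
  end.

(* Main.v *)
From Stdlib Require Import Classical.
Require Import Defs.
From mathcomp Require Import all_boot.
From mathcomp Require Import zify.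

Set Implicit Arguments.
Unset Strict Implicit.
Unset Printing Implicit Defensive.

Lemma ex_min_P (P : nat -> Prop) n : P n ->
  exists m, P m /\ forall w, P w -> m <= w.
Proof.
elim/ltn_ind: n => n IH Pn.
case: (classic (exists w, w < n /\ P w)) => [[w [lt Pw]]|H].
  exact: IH w lt Pw.
exists n; split=> // w Pw; rewrite leqNgt; apply/negP => lt; apply: H; eauto.
Qed.

Lemma ex_max_P (P : nat -> Prop) B n : P n -> (forall w, P w -> w <= B) ->
  exists m, P m /\ forall w, P w -> w <= m.
Proof.
move=> Pn HB.
have Q0 : P (B - (B - n)).
  have h := HB _ Pn. have -> : B - (B - n) = n by lia. exact Pn.
have [m [Pm Hm]] := @ex_min_P (fun w => P (B - w)) (B - n) Q0.
exists (B - m); split => // w Pw.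
have hw := HB _ Pw.
have : m <= B - w by apply: Hm; have -> : B - (B - w) = w by lia.
lia.
Qed.

Lemma const_table F k (C : table F -> Prop) (psi : seq F -> nat) c T :
  closed_class k C -> C T -> c <> Mi ->
  exists T', [/\ C T', attrs T' = attrs T &
    exists w, psi_of k psi c T' w /\ w <= psi [::]].
Proof.
move=> [_ HC] CT hc.
pose T' := Table (attrs T) [seq (r.1, [:: 0]) | r <- rows T].
have CT' : C T'.
  apply: (HC T) => //; apply: step_change => //=.
    by rewrite -map_comp; apply: eq_map.
  by move=> r /mapP [r0 _ ->].
have ND : nondet_tree_for k T' [:: Term 0].
  split.
  - split => //; move=> t [<-|[]]; constructor.
  - move=> t [<-|[]]; constructor.
  - move=> r _; exists [::], 0; split; last by move=> f d [].
    exists (Term 0); [left => // | constructor].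
  - move=> r p a /mapP [r0 _ ->] [t [<-|[]] cp].
    inversion cp; subst; by rewrite inE.
have TC : tree_cost psi [:: Term 0] (psi [::]).
  split.
    exists [::], 0; split => //; exists (Term 0); [left => // | constructor].
  move=> p a [t [<-|[]] cp]; inversion cp; subst; done.
exists T'; split => //.
case: c hc => // _.
- have [m [[G [HG1 HG2]] Hm]] := @ex_min_P
    (fun w => exists G, det_tree_for k T' G /\ tree_cost psi G w) (psi [::])
    (ltac:(exists [:: Term 0]; split => //; split => //;
           exists (Term 0); split => //; constructor)).
  exists m; split; last by apply: Hm; exists [:: Term 0]; split => //; split => //;
           exists (Term 0); split => //; constructor.
  split; first by exists G.
  by move=> G' w H1 H2; apply: Hm; exists G'.
- have [m [[G [HG1 HG2]] Hm]] := @ex_min_P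
    (fun w => exists G, nondet_tree_for k T' G /\ tree_cost psi G w) (psi [::])
    (ltac:(exists [:: Term 0]; split => //)).
  exists m; split; last by apply: Hm; exists [:: Term 0].
  split; first by exists G.
  by move=> G' w H1 H2; apply: Hm; exists G'.
Qed.

Lemma main_c F k (C : table F -> Prop) (psi : seq F -> nat) c :
  closed_class k C -> c <> Mi ->
  ~ is_typ (U k C psi Mi Mi) Talpha ->
  is_typ (U k C psi Mi c) Tepsilon.
Proof.
move=> HC hc Hna.
exists (psi [::]) => n [m [[T [CT Hv [w [Hw1 Hw2]]]] Hmax]].
rewrite ltnNge; apply/negP => Ln.
apply: Hna.
have allb : forall T0, C T0 -> psi (attrs T0) <= m.
  move=> T0 CT0.
  have [T' [CT' eqa [w' [Hw' Lw']]]] := const_table psi HC CT0 hc.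
  rewrite -eqa; apply: Hmax; exists T'; split => //.
  exists w'; split => //; exact: leq_trans Lw' Ln.
split.
  move=> N; exists (maxn N m); split; first exact: leq_maxl.
  have [mx [Pmx Hmx]] := @ex_max_P
    (fun v => Uset k C psi Mi Mi (maxn N m) v) (maxn N m) (psi (attrs T))
    (ltac:(exists T; split => //; exists (psi (attrs T)); split => //;
           apply: leq_trans (allb _ CT) (leq_maxr _ _)))
    (ltac:(move=> v [T1 [_ -> [w1 [/= -> ?]]]]; done)).
  by exists mx; split.
exists m => n' m' [[T1 [CT1 -> _]] _]; exact: allb.
Qed.

Theorem lemma5 (F : Type) (k : nat) (C : table F -> Prop) (psi : seq F -> nat) :
  inhabited F -> 2 <= k -> closed_class k C ->
  ~ is_typ (U k C psi Mi Mi) Talpha ->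
  is_typ (U k C psi Mi Md) Tepsilon /\ is_typ (U k C psi Mi Ma) Tepsilon.
Proof.
move=> _ _ HC Hna; split; apply: main_c => //.
Qed.
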